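(* Let $\mathcal{X}$ be Polish and $\mathcal{H}\subseteq\{0,1\}^{\mathcal{X}}$ a measurable concept class that has an infinite Littlestone tree. Then for any learning algorithm $\hat h_n$ there exists a realizable distribution $P$ such that $\mathbf{E}[\mathrm{er}_P(\hat h_n)]\ge\frac{1}{32n}$ for infinitely many $n$. In particular, $\mathcal{H}$ is not learnable at rate faster than $\frac1n$.
   Context: $\mathcal{H}$ measurable: there is a Polish $\Theta$ and Borel $\mathsf{h}:\Theta\times\mathcal{X}\to\{0,1\}$ with $\mathcal{H}=\{\mathsf{h}(\theta,\cdot)\}$. $\mathrm{er}_P(h)=P\{(x,y):h(x)\ne y\}$; $P$ realizable if $\inf_{h\in\mathcal{H}}\mathrm{er}_P(h)=0$. A learning algorithm is a sequence of universally measurable maps $H_n:(\mathcal{X}\times\{0,1\})^n\times\mathcal{X}\to\{0,1\}$ with $\hat h_n(x)=H_n((X_1,Y_1),\ldots,(X_n,Y_n),x)$ for i.i.d. $(X_i,Y_i)\sim P$. Not learnable faster than $R$: every algorithm has a realizable $P$ and $C,c>0$ with $\mathbf{E}[\mathrm{er}_P(\hat h_n)]\ge CR(cn)$ for infinitely many $n$. Littlestone tree of depth $d\le\infty$: a collection $\{x_{\mathbf u}:0\le k<d,\ \mathbf u\in\{0,1\}^k\}\subseteq\mathcal{X}$ such that for every $\mathbf y\in\{0,1\}^d$ and $n<d$ there is $h\in\mathcal{H}$ with $h(x_{\mathbf y_{\le k}})=y_{k+1}$ for $0\le k\le n$, $\mathbf y_{\le k}=(y_1,\ldots,y_k)$.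 Infinite: $d=\infty$. *)

(* Defs.v *)
From HB Require Import structures.
From mathcomp Require Import all_boot all_order all_algebra.
From mathcomp Require Import all_classical all_reals all_analysis.
Set Implicit Arguments. Unset Strict Implicit. Unset Printing Implicit Defensive.
Import Order.TTheory GRing.Theory Num.Theory.
Local Open Scope classical_set_scope.
Local Open Scope ring_scope.

Definition polish (R : realType) (X : topologicalType) : Prop :=
  (exists D : set X, countable D /\ closure D = setT) /\
  exists dist : X -> X -> R,
    [/\ (forall x y, 0 <= dist x y /\ (dist x y = 0 <-> x = y)),
        (forall x y, dist x y = dist y x),
        (forall x y z, dist x z <= dist x y + dist y z),
        (forall A : set X, open A <->
           (forall x, A x -> exists2 e, 0 < e & [set y | dist x y < e] `<=` A)) &
        (forall u : nat -> X,
           (forall e, 0 < e -> exists N, forall m n, (N <= m)%N -> (N <= n)%N ->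
               dist (u m) (u n) < e) ->
           exists x, forall e, 0 < e -> exists N, forall n, (N <= n)%N ->
               dist (u n) x < e)].

Definition borelT (X : ptopologicalType) := g_sigma_algebraType (@open X).

(* Example space X x {0,1}, with the product sigma-algebra (Borel x discrete). *)
Definition Zsp (X : ptopologicalType) := (borelT X * bool)%type.

Definition universally_measurable (R : realType) d (T : measurableType d)
    (A : set T) : Prop :=
  forall mu : probability T R, exists B C : set T,
    [/\ measurable B, measurable C, B `<=` A, A `<=` C & mu (C `\` B) = 0%E].

Definition universally_measurable_fun (R : realType) d (T : measurableType d)
    (f : T -> bool) : Prop :=
  universally_measurable R (f @^-1` [set true]).

Definition measurable_class (R : realType) (X : ptopologicalType)
    (H : set (X -> bool)) : Prop :=
  exists (Theta : ptopologicalType) (h : Theta -> X -> bool),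
    [/\ polish R Theta,
        measurable_fun [set: (borelT Theta * borelT X)%type]
          (fun p : (borelT Theta * borelT X)%type => h p.1 p.2) &
        H = [set h th | th in [set: Theta]]].

(* Infinite Littlestone tree: nodes x_u indexed by u in {0,1}^k (k : nat);
   y_{<=k} = (y_1,...,y_k) is [:: y 0; ...; y (k-1)] and y_{k+1} is y k. *)
Definition has_infinite_littlestone_tree (X : Type) (H : set (X -> bool)) : Prop :=
  exists x : seq bool -> X,
    forall (y : nat -> bool) (n : nat),
      exists2 h, H h & forall k, (k <= n)%N -> h (x (mkseq y k)) = y k.

(* Error rate er_P(h) = P{(x,y) : h x <> y}; we use the outer measure of P,
   which coincides with P (resp. its completion) on Borel (resp. universally
   measurable) sets. *)
Definition er (R : realType) (X : ptopologicalType) (P : probability (Zsp X) R)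
    (h : X -> bool) : \bar R :=
  (mu_ext P) [set z : Zsp X | h z.1 != z.2].

Definition realizable (R : realType) (X : ptopologicalType)
    (P : probability (Zsp X) R) (H : set (X -> bool)) : Prop :=
  ereal_inf [set er P h | h in H] = 0%E.

Definition learner (X : ptopologicalType) := forall n : nat, n.-tuple (Zsp X) -> X -> bool.

Definition is_learning_algorithm (R : realType) (X : ptopologicalType)
    (A : learner X) : Prop :=
  forall n : nat, universally_measurable_fun R
    (fun p : (n.-tuple (Zsp X) * borelT X)%type => A n p.1 p.2).

Fixpoint iid_expect (R : realType) d (T : measurableType d) (P : probability T R)
    (n : nat) : (n.-tuple T -> \bar R) -> \bar R :=
  match n return (n.-tuple T -> \bar R) -> \bar R with
  | 0 => fun F => F [tuple]
  | n'.+1 => fun F =>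
      (\int[P]_z iid_expect P (fun s : n'.-tuple T => F (cons_tuple z s)))%E
  end.

Definition expected_error (R : realType) (X : ptopologicalType)
    (P : probability (Zsp X) R) (A : learner X) (n : nat) : \bar R :=
  iid_expect P (fun S : n.-tuple (Zsp X) => er P (A n S)).

Definition not_learnable_faster_than (R : realType) (X : ptopologicalType)
    (H : set (X -> bool)) (rate : R -> R) : Prop :=
  forall A : learner X, is_learning_algorithm R A ->
    exists P : probability (Zsp X) R, realizable P H /\
      exists C c : R, [/\ 0 < C, 0 < c &
        forall N : nat, exists2 n : nat, (N < n)%N &
          ((C * rate (c * n%:R))%:E <= expected_error P A n)%E].

(* Main.v *)
Require Import Defs.
From HB Require Import structures.
From mathcomp Require Import all_boot all_order all_algebra.
From mathcomp Require Import all_classical all_reals all_analysis.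
From mathcomp Require Import measurable_realfun.
From mathcomp Require Import ring lra.
Import Order.TTheory GRing.Theory Num.Theory.
Local Open Scope classical_set_scope.
Local Open Scope ring_scope.
Set Implicit Arguments. Unset Strict Implicit.

Section intlb.
Context d (T : measurableType d) (R : realType).
Local Open Scope ereal_scope.
Import HBNNSimple.

Lemma int_lb (P : {measure set T -> \bar R}) (a : nat -> T) (w dd : nat -> R) (k : nat)
  (G : T -> \bar R) :
  (forall j, measurable [set a j]) ->
  (forall i j, (i < k)%N -> (j < k)%N -> a i = a j -> i = j) ->
  (forall j, (0 <= dd j)%R) -> (forall j, (0 <= w j)%R) ->
  (forall j, (w j)%:E <= P [set a j]) -> (forall z, 0 <= G z) ->
  (forall j, (j < k)%N -> (dd j)%:E <= G (a j)) ->
  (\sum_(j < k) w j * dd j)%:E <= \int[P]_z G z.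
Proof.
move=> ma ainj d0 w0 wP G0 dG.
pose h := sum_nnsfun (fun j => scale_nnsfun (indic_nnsfun R (ma j)) (d0 j)) k.
have hE z : h z = (\sum_(j < k) dd j * \1_[set a j] z)%R.
  by rewrite /h sum_nnsfunE.
have hG z : (h z)%:E <= G z.
  rewrite hE; have [[i ik ->]|nz] := pselect (exists2 i, (i < k)%N & z = a i).
    rewrite (bigD1 (Ordinal ik)) //= big1 ?addr0.
      by rewrite indicE mem_set // mulr1; exact: dG.
    move=> j /eqP jne; rewrite indicE memNset ?mulr0 //= => aji.
    by apply: jne; apply: val_inj => /=; apply: ainj => //; rewrite aji.
  rewrite big1 //; move=> j _; rewrite indicE memNset ?mulr0 //= => zj.
  by apply: nz; exists j.
apply: (@le_trans _ _ (\int[P]_z (h z)%:E)).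
  under eq_integral do rewrite hE -sumEFin.
  rewrite ge0_integral_sum //; last first.
    by move=> j z _; rewrite lee_fin mulr_ge0.
    by move=> j; apply/measurable_EFinP; apply: measurable_funM => //; exact: measurable_indic.
  rewrite -sumEFin; apply: lee_sum => j _.
  rewrite (@integralZl_indic _ _ _ _ _ measurableT (fun _ => [set a j])) //; last first.
    by move=> /lt_geF; rewrite d0.
  rewrite integral_indic // setIT EFinM muleC.
  by apply: lee_wpmul2l; rewrite ?lee_fin ?d0.
rewrite integralT_nnsfun ge0_integralTE //.
by apply: ereal_sup_ubound; exists h.
Qed.
End intlb.

Fixpoint Lsum (R : realType) (w : nat -> R) (k n : nat) : (n.-tuple nat -> R) -> R :=
  match n return (n.-tuple nat -> R) -> R with
  | 0 => fun c => c [tuple]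
  | n'.+1 => fun c => \sum_(j < k) w j * Lsum w k (fun t : n'.-tuple nat => c (cons_tuple (j : nat) t))
  end.

Section Lsum_lemmas.
Context (R : realType) (w : nat -> R) (k : nat).

Lemma Lsum_ge0 n (c : n.-tuple nat -> R) : (forall j, 0 <= w j) -> (forall t, 0 <= c t) -> 0 <= Lsum w k c.
Proof.
move=> w0; elim: n c => [|n IH] c c0 /=; first exact: c0.
by apply: sumr_ge0 => j _; apply: mulr_ge0 => //; apply: IH.
Qed.

Lemma LsumD n (c1 c2 : n.-tuple nat -> R) : Lsum w k (fun t => c1 t + c2 t) = Lsum w k c1 + Lsum w k c2.
Proof.
elim: n c1 c2 => [|n IH] c1 c2 //=.
rewrite -big_split /=; apply: eq_bigr => j _.
by rewrite -mulrDr IH.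
Qed.

Lemma LsumZ n (c : n.-tuple nat -> R) r : Lsum w k (fun t => r * c t) = r * Lsum w k c.
Proof.
elim: n c => [|n IH] c //=.
rewrite mulr_sumr; apply: eq_bigr => j _.
by rewrite IH mulrCA.
Qed.

Lemma Lsum1 n : Lsum w k (fun _ : n.-tuple nat => 1) = (\sum_(j < k) w j) ^+ n.
Proof.
elim: n => [|n IH] //=.
rewrite exprS mulr_suml; apply: eq_bigr => j _.
by rewrite IH.
Qed.
End Lsum_lemmas.

Section iidlb.
Context d (T : measurableType d) (R : realType).
Local Open Scope ereal_scope.

Lemma iid_ge0 (P : probability T R) n (F : n.-tuple T -> \bar R) :
  (forall S, 0 <= F S) -> 0 <= iid_expect P F.
Proof.
elim: n F => [|n IH] F F0 /=; first exact: F0.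
by apply: integral_ge0 => z _; apply: IH.
Qed.

Lemma iid_lb (P : probability T R) (a : nat -> T) (w : nat -> R) (k : nat) :
  (forall j, measurable [set a j]) ->
  (forall i j, (i < k)%N -> (j < k)%N -> a i = a j -> i = j) ->
  (forall j, (0 <= w j)%R) -> (forall j, (w j)%:E <= P [set a j]) ->
  forall n (F : n.-tuple T -> \bar R) (c : n.-tuple nat -> R),
  (forall S, 0 <= F S) -> (forall t, (0 <= c t)%R) ->
  (forall t : n.-tuple nat, all (fun j => (j < k)%N) t -> (c t)%:E <= F (map_tuple a t)) ->
  (Lsum w k c)%:E <= iid_expect P F.
Proof.
move=> ma ainj w0 wP; elim=> [|n IH] F c F0 c0 cF /=.
  by have := cF [tuple] isT; congr (_ <= F _); apply: val_inj.
apply: (@int_lb _ _ _ P a w (fun j => Lsum w k (fun t => c (cons_tuple j t))) k) => //.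
- by move=> j; apply: Lsum_ge0.
- by move=> z; apply: iid_ge0.
move=> j jk; apply: IH => //.
move=> t tk; have := cF (cons_tuple j t); rewrite /= jk tk => /(_ isT).
by congr (_ <= F _); apply: val_inj.
Qed.
End iidlb.

Definition wgt (R : realType) (j : nat) : R := ((2 ^ j.+1)%:R)^-1.
Lemma wgt_ge0 (R : realType) j : 0 <= wgt R j.
Proof. by rewrite /wgt invr_ge0. Qed.
Definition wgtn (R : realType) j : {nonneg R} := NngNum (wgt_ge0 R j).

Lemma wgt_sum (R : realType) m : \sum_(j < m) wgt R j = 1 - ((2 ^ m)%:R)^-1.
Proof.
elim: m => [|m IH]; first by rewrite big_ord0 expn0 invr1 subrr.
rewrite big_ord_recr /= IH /wgt expnS natrM.
have h2 : (2 ^ m)%:R != 0 :> R by rewrite pnatr_eq0 expn_eq0.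
by field.
Qed.

Section geo.
Context d (T : measurableType d) (R : realType) (a : nat -> T).
Local Open Scope ereal_scope.

Definition geo := mseries (fun j => mscale (wgtn R j) (\d_(a j))) 0.

Lemma geoE A : geo A = \sum_(0 <= j <oo) (wgt R j)%:E * \d_(a j) A.
Proof. by []. Qed.

Lemma geoT : geo setT = 1.
Proof.
rewrite geoE.
have := @cvg_geometric_eseries_half R 1 0.
rewrite expr0 divr1 => /cvg_lim => <- //.
congr (limn _); apply/funext => n; rewrite /eseries; apply: eq_bigr => j _.
by rewrite diracE in_setT mule1 /wgt addn1 div1r.
Qed.

HB.instance Definition _ := Measure.on geo.
HB.instance Definition _ := Measure_isProbability.Build _ _ _ geo geoT.

Lemma geo_partial (U : set T) m : (forall j, (j < m)%N -> U (a j)) ->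
  (\sum_(j < m) wgt R j)%:E <= geo U.
Proof.
move=> hU; rewrite geoE.
apply: le_trans; last apply: (nneseries_lim_ge m).
  rewrite -sumEFin big_mkord; apply: lee_sum => j _.
  by rewrite diracE mem_set ?mule1 //; apply: hU.
by move=> j _; rewrite mule_ge0 // lee_fin wgt_ge0.
Qed.

Lemma geo_atom j : (wgt R j)%:E <= geo [set a j].
Proof.
rewrite geoE; apply: le_trans; last apply: (nneseries_lim_ge j.+1).
  rewrite big_mkord big_ord_recr /= diracE mem_set // mule1 leeDr //.
  by apply: sume_ge0 => i _; rewrite mule_ge0 // lee_fin wgt_ge0.
by move=> i _; rewrite mule_ge0 // lee_fin wgt_ge0.
Qed.
Lemma geo_compl (U : set T) m : measurable U -> (forall j, (j < m)%N -> U (a j)) ->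
  geo (~` U) <= (((2 ^ m)%:R)^-1)%:E.
Proof.
move=> mU hU; rewrite probability_setC // leeBlDr ?fin_num_measure //.
have := geo_partial hU; rewrite wgt_sum => hU'.
apply: le_trans (leeD2l _ hU'); rewrite -EFinD lee_fin; lra.
Qed.
End geo.

Lemma zsp_single (R : realType) (X : ptopologicalType) : polish R X ->
  forall z : Zsp X, measurable [set z].
Proof.
move=> [_ [dist [dpos dsym dtri dopen _]]] [p b].
have -> : [set (p, b)] = [set p] `*` [set b] :> set (Zsp X).
  by apply/seteqP; split => [[u v] /= [-> ->]|[u v] /= [-> ->]].
apply: measurableX => //.
rewrite -(setCK [set p]); apply: measurableC; apply: sub_gen_smallest.
apply/dopen => z zp; exists (dist z p).
  have [+ _] := dpos z p; rewrite le_eqVlt => /orP[/eqP/esym|] //.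
  by move/(proj1 (proj2 (dpos z p))).
by move=> u /= hu up; rewrite up ltxx in hu.
Qed.

Lemma tree_distinct (X : Type) (H : set (X -> bool)) (x : seq bool -> X) :
  (forall (y : nat -> bool) (n : nat),
      exists2 h, H h & forall k, (k <= n)%N -> h (x (mkseq y k)) = y k) ->
  forall y i j, (i < j)%N -> x (mkseq y i) <> x (mkseq y j).
Proof.
move=> Ht y i j ij E.
pose y' m := if (m < j)%N then y m else ~~ y i.
have [h _ hh] := Ht y' j.
have e1 : mkseq y' i = mkseq y i.
  rewrite /mkseq; apply/eq_in_map => m; rewrite mem_iota add0n => /andP[_ mi].
  by rewrite /y' (ltn_trans mi ij).
have e2 : mkseq y' j = mkseq y j.
  rewrite /mkseq; apply/eq_in_map => m; rewrite mem_iota add0n => /andP[_ mi].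
  by rewrite /y' mi.
have := hh i (ltnW ij); have := hh j (leqnn j).
rewrite e1 e2 -E /y' ij ltnn => ->.
by case: (y i).
Qed.

Lemma bernoulli_ineq (R : realType) (u : R) n : 0 <= u -> u <= 1 ->
  1 - n%:R * u <= (1 - u) ^+ n.
Proof.
move=> u0 u1; elim: n => [|n IH]; first by rewrite mul0r subr0 expr0.
have a0 : 0 <= (1 - u) ^+ n by apply: exprn_ge0; lra.
rewrite exprS -natr1; set a := (1 - u) ^+ n in IH a0 *.
have h1 : 0 <= (a - (1 - n%:R * u)) * (1 - u) by apply: mulr_ge0; lra.
have h2 : 0 <= n%:R * (u * u) by apply: mulr_ge0 => //; apply: mulr_ge0.
nra.
Qed.

Unset Implicit Arguments.
Set Strict Implicit.

Theorem mainTheorem8 (R : realType) (X : ptopologicalType) (H : set (X -> bool)) :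
  polish R X -> measurable_class R H -> has_infinite_littlestone_tree H ->
  (forall A : learner X, is_learning_algorithm R A ->
     exists P : probability (Zsp X) R, realizable P H /\
       forall N : nat, exists2 n : nat, (N < n)%N &
         (((32 * n%:R)^-1)%:E <= expected_error P A n)%E)
  /\ not_learnable_faster_than H (fun t : R => t^-1).
Proof.
move=> HX _ [x Ht].
have main : forall A : learner X, is_learning_algorithm R A ->
     exists P : probability (Zsp X) R, realizable P H /\
       forall N : nat, exists2 n : nat, (N < n)%N &
         (((32 * n%:R)^-1)%:E <= expected_error P A n)%E.
  move=> A _.
  pose atomS (s : seq bool) (j : nat) : Zsp X := (x (take j s), nth false s j).
  pose cb (D : nat) (s : seq bool) (b : bool) (t : (2 ^ D.-1)%N.-tuple nat) : R :=
    ((A (2 ^ D.-1)%N (map_tuple (atomS s) t) (x s) != b) : bool)%:R.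
  pose Q (D : nat) (s : seq bool) (b : bool) : R := Lsum (wgt R) D (cb D s b).
  pose ch (D : nat) (s : seq bool) : bool := Q D s false <= Q D s true.
  pose pre := fix pre D := if D is D'.+1 then rcons (pre D') (ch D' (pre D')) else [::].
  pose y D := ch D (pre D).
  have preE D : mkseq y D = pre D by elim: D => //= D IH; rewrite mkseqS IH.
  pose a j : Zsp X := (x (mkseq y j), y j).
  have ma j : measurable [set a j] by exact: (zsp_single HX (a j)).
  have adist i j : a i = a j -> i = j.
    move=> [] E _; case: (ltngtP i j) => // ij.
      by case: (tree_distinct Ht ij E).
    by case: (tree_distinct Ht ij (esym E)).
  exists (geo R a); split.
    rewrite /realizable; apply/eqP; rewrite eq_le; apply/andP; split; last first.
      by apply: le_ereal_inf_tmp => _ [h _ <-]; exact: mu_ext_ge0.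
    apply/lee_addgt0Pr => e e0; rewrite add0e.
    have h1 := archimedean.Num.Theory.truncnS_gt (e^-1).
    set m := Num.Def.trunc _ in h1.
    have h2 : (m.+1)%:R < (2 ^ m.+1)%:R :> R by rewrite ltr_nat ltn_expl.
    have em : ((2 ^ m.+1)%:R)^-1 < e.
      rewrite -[e in _ < e]invrK ltf_pV2 ?posrE ?invr_gt0 ?ltr0n ?expn_gt0 //.
      exact: lt_trans h1 h2.
    apply: ge_ereal_inf.
    have [h Hh hh] := Ht y m.
    exists (er (geo R a) h); first by exists h.
    apply: (@le_trans _ _ (((2 ^ m.+1)%:R)^-1)%:E); last by rewrite lee_fin ltW.
    pose U := \bigcup_j (if (j <= m)%N then [set a j] else set0).
    have mU : measurable U by apply: bigcupT_measurable => j; case: ifP.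
    have sub : [set z : Zsp X | h z.1 != z.2] `<=` ~` U.
      move=> z /= hz [j _]; case: ifP => // jm /= zj.
      by move: hz; rewrite zj /= hh // eqxx.
    rewrite /er; apply: le_trans (le_mu_ext _ sub) _.
    rewrite measurable_mu_extE; last exact: measurableC.
    apply: geo_compl => // j jm; exists j => //; by rewrite -ltnS jm.
  move=> N; exists (2 ^ N)%N; first by rewrite ltn_expl.
  pose D := N.+1.
  pose s := pre D.
  have sE : s = mkseq y D by rewrite preE.
  have atomE j : (j < D)%N -> atomS s j = a j.
    move=> jD; rewrite /atomS sE /a; congr pair.
      by rewrite /mkseq -map_take take_iota (minn_idPl (ltnW jD)).
    by rewrite nth_mkseq.
  have key : ((wgt R D * Q D s (y D))%:E <= expected_error (geo R a) A (2 ^ N)%N)%E.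
    rewrite /Q -LsumZ.
    apply: (@iid_lb _ _ _ (geo R a) a (wgt R) D) => //.
    - by move=> i j _ _; apply: adist.
    - exact: wgt_ge0.
    - exact: geo_atom.
    - by move=> S; exact: mu_ext_ge0.
    - by move=> t; apply: mulr_ge0; [exact: wgt_ge0|exact: ler0n].
    move=> t tD.
    have mt : map_tuple (atomS s) t = map_tuple a t.
      apply: val_inj => /=; apply/eq_in_map => j jt; apply: atomE.
      by move/allP: tD => /(_ j jt).
    rewrite /cb mt; case: eqP => [_|ne]; first by rewrite mulr0; exact: mu_ext_ge0.
    rewrite mulr1 /er.
    have sub : [set a D] `<=` [set z : Zsp X | A (2 ^ N)%N (map_tuple a t) z.1 != z.2].
      move=> z -> /=; rewrite /a preE -/s; apply/eqP => E; apply: ne; exact: E.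
    apply: le_trans (le_mu_ext _ sub).
    by rewrite measurable_mu_extE //; exact: geo_atom.
  apply: le_trans key; rewrite lee_fin.
  have Qsum : Q D s true + Q D s false = (\sum_(j < D) wgt R j) ^+ (2 ^ N)%N.
    rewrite /Q -LsumD -Lsum1; congr (Lsum _ _ _); apply/funext => t.
    by rewrite /cb /=; case: (A _ _ _); rewrite /= ?add0r ?addr0.
  have Qge : Q D s (~~ y D) <= Q D s (y D).
    rewrite /y -/s /ch; case E: (Q D s false <= Q D s true) => //=.
    by move: E; rewrite leNgt => /negbFE/ltW.
  have Qsum' : Q D s (y D) + Q D s (~~ y D) = (\sum_(j < D) wgt R j) ^+ (2 ^ N)%N.
    by case: (y D) => //=; rewrite addrC.
  rewrite wgt_sum in Qsum'.
  set r := (2 ^ N)%:R : R.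
  have r0 : 0 < r by rewrite ltr0n expn_gt0.
  have e1 : (2 ^ D)%:R = 2 * r :> R by rewrite /r expnS natrM.
  have e2 : (2 ^ D.+1)%:R = 4 * r :> R by rewrite /r expnS expnS mulnA natrM.
  have B := @bernoulli_ineq R ((2 ^ D)%:R^-1) (2 ^ N)%N.
  rewrite -/r e1 in B Qsum'.
  have hb : r * (2 * r)^-1 = 2^-1 by field; rewrite gt_eqF.
  have u0 : 0 <= (2 * r)^-1 by rewrite invr_ge0; lra.
  have u1 : (2 * r)^-1 <= 1.
    have r1 : 1 <= r by rewrite /r ler1n expn_gt0.
    rewrite invf_le1; lra.
  have {}B := B u0 u1; rewrite hb in B.
  rewrite /wgt e2 !invfM.
  set q := Q D s (y D) in Qge Qsum' *.
  set q' := Q D s (~~ y D) in Qge Qsum'.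
  have qq : 4^-1 <= q by lra.
  have ri : 0 < r^-1 by rewrite invr_gt0.
  nra.
split => //.
move=> A hA; have [P [rP hP]] := main A hA; exists P; split => //.
exists (32^-1 : R), (1 : R); split => // N.
have [n Nn hn] := hP N; exists n => //.
by rewrite mul1r -invfM.
Qed.
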